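(* Let $\mathbb{G}$ be a streaming graph, $W$ a time window and $Q$ a query graph. An incoming edge $\sigma$ arriving at time $t_i$ is not discardable if and only if, in the current snapshot $\mathbb{G}_i$, there exists at least one query edge $\epsilon\in E(Q)$ such that (1) the prerequisite subquery $Preq(\epsilon)$ has at least one time-constrained match $g$ (a subgraph of $\mathbb{G}_i$) containing $\sigma$, and (2) $\sigma$ is matched to $\epsilon$ in the match relation between $g$ and $Preq(\epsilon)$. Otherwise $\sigma$ is discardable.
   Context: A streaming graph $\mathbb{G}$ is a constantly growing sequence of directed edges $\sigma_1,\sigma_2,\dots$, each with two labelled endpoints and arriving at time $t_i$ (its timestamp), $t_i<t_j$ for $i<j$. With a time window of duration $|W|$, the snapshot at current time $t$ consists of the edges with timestamps in $(t-|W|,t]$ and their endpoints. A query graph is $Q=(V(Q),E(Q),L,\prec)$: vertices, directed edges, vertex labelling $L$, and a strict partial order $\prec$ on $E(Q)$. A subgraph $g$ of the snapshot is a time-constrained match of a query (or subquery with the restricted timing order) if there is a bijection $F$ from the query vertices to $V(g)$ preserving labels, with $\overrightarrow{uv}$ a query edge iff $\overrightarrow{F(u)F(v)}\in E(g)$, and such that $\epsilon\prec\epsilon'$ implies the data edge matched to $\epsilon$ has smaller timestamp than the data edge matched to $\epsilon'$. An incoming edge $\sigma$ is discardable if $\sigma$ cannot be included in any complete time-constrained match of $Q$, no matter what edges arrive in the future. For $\epsilon\in E(Q)$, $Preq(\epsilon)=\{\epsilon' : \epsilon'\prec\epsilon\}\cup\{\epsilon\}$, and the prerequisite subquery $Preq(\epsilon)$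 is the subquery of $Q$ induced by these edges (with timing order $\prec$ restricted to them). *)

(* Defs.v *)
From HB Require Import structures.
From mathcomp Require Import all_boot all_order all_algebra.
Set Implicit Arguments. Unset Strict Implicit. Unset Printing Implicit Defensive.
Import Order.TTheory GRing.Theory Num.Theory.
Local Open Scope ring_scope.

(* A data vertex is an identifier paired with its label; its label is [.2]. *)
Definition dvertex (L : Type) := (nat * L)%type.

Record sedge (L : Type) (R : Type) :=
  SEdge { esrc : dvertex L; edst : dvertex L; etime : R }.

(* A streaming graph: sigma_0, sigma_1, ... (edges are identified by index). *)
Definition stream (L : Type) (R : realFieldType) := nat -> sedge L R.

Definition increasing_times (L : Type) (R : realFieldType) (s : stream L R) :=
  forall i j : nat, (i < j)%N -> etime (s i) < etime (s j).

Definition in_snapshot (L : Type) (R : realFieldType) (s : stream L R)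
  (W t : R) (k : nat) := t - W < etime (s k) <= t.

Record query (L : eqType) := Query {
  qV : finType;
  qlab : qV -> L;
  qE : {set qV * qV};
  qprec : rel (qV * qV) }.
Arguments qlab {L} q _.
Arguments qE {L} q.
Arguments qprec {L} q _ _.

Definition strict_po (L : eqType) (Q : query L) :=
  (forall e, e \in qE Q -> ~~ qprec Q e e) /\
  (forall e1 e2 e3, e1 \in qE Q -> e2 \in qE Q -> e3 \in qE Q ->
     qprec Q e1 e2 -> qprec Q e2 e3 -> qprec Q e1 e3).

Definition qverts (L : eqType) (Q : query L) (S : {set qV Q * qV Q}) :
  {set qV Q} := [set u | [exists e in S, (e.1 == u) || (e.2 == u)]].

Arguments qverts {L} Q S.

Definition Preq (L : eqType) (Q : query L) (eps : qV Q * qV Q) :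
  {set qV Q * qV Q} := [set e in qE Q | qprec Q e eps] :|: [set eps].

Arguments Preq {L} Q eps.

(* F is the vertex
   bijection onto V(g), M e is the data edge matched to query edge e, and
   the matched subgraph g is the image of S under M. *)
Definition tc_match (L : eqType) (R : realFieldType) (s : stream L R) (W t : R)
  (Q : query L) (S : {set qV Q * qV Q})
  (F : qV Q -> dvertex L) (M : qV Q * qV Q -> nat) :=
  {in qverts Q S &, injective F} /\
  (forall u, u \in qverts Q S -> (F u).2 = qlab Q u) /\
  (forall e, e \in S ->
     [/\ in_snapshot s W t (M e), esrc (s (M e)) = F e.1 & edst (s (M e)) = F e.2]) /\
  (forall e e', e \in S -> e' \in S -> qprec Q e e' ->
     etime (s (M e)) < etime (s (M e'))).

Arguments tc_match {L R} s W t Q S F M.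

(* sigma_i is discardable: whatever edges arrive after sigma_i, at no later
   time does a complete time-constrained match of Q contain sigma_i. *)
Definition discardable (L : eqType) (R : realFieldType) (s : stream L R)
  (W : R) (Q : query L) (i : nat) :=
  forall s' : stream L R,
    (forall k, (k <= i)%N -> s' k = s k) -> increasing_times s' ->
    forall j, (i <= j)%N ->
    forall F M, tc_match s' W (etime (s' j)) Q (qE Q) F M ->
    forall e, e \in qE Q -> M e <> i.

(* Main.v *)
Require Import Defs.
From HB Require Import structures.
From mathcomp Require Import all_boot all_order all_algebra.
From mathcomp Require Import zify ring lra.
From Stdlib Require Import Classical.
Import Order.TTheory GRing.Theory Num.Theory.
Local Open Scope ring_scope.

Lemma inc_le (L : Type) (R : realFieldType) (s : stream L R) a b :
  increasing_times s -> (a <= b)%N -> etime (s a) <= etime (s b).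
Proof.
move=> Hs; rewrite leq_eqVlt => /orP[/eqP->//|ab].
by apply/ltW/Hs.
Qed.

Lemma inc_idx (L : Type) (R : realFieldType) (s : stream L R) a b :
  increasing_times s -> etime (s a) <= etime (s b) -> (a <= b)%N.
Proof.
move=> Hs Hab; rewrite leqNgt; apply/negP => ba.
by have := Hs _ _ ba; rewrite ltNge Hab.
Qed.

Lemma qverts_sub (L : eqType) (Q : query L) (S1 S2 : {set qV Q * qV Q}) u :
  S1 \subset S2 -> u \in qverts Q S1 -> u \in qverts Q S2.
Proof.
move=> /subsetP sub; rewrite !inE => /existsP[e /andP[He Hu]].
by apply/existsP; exists e; rewrite sub.
Qed.

Lemma Preq_sub (L : eqType) (Q : query L) eps :
  eps \in qE Q -> Preq Q eps \subset qE Q.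
Proof.
move=> He; apply/subsetP => e; rewrite !inE => /orP[/andP[]//|/eqP->//].
Qed.

Lemma fwd (L : eqType) (R : realFieldType) (s s' : stream L R) (W : R)
  (Q : query L) (i j : nat) F M e :
  increasing_times s -> 0 < W ->
  (forall k, (k <= i)%N -> s' k = s k) -> increasing_times s' -> (i <= j)%N ->
  tc_match s' W (etime (s' j)) Q (qE Q) F M -> e \in qE Q -> M e = i ->
  tc_match s W (etime (s i)) Q (Preq Q e) F M.
Proof.
move=> Hs W0 Hss' Hs' ij [Finj [Flab [Fedge Ford]]] He Mei.
have sub := @Preq_sub _ _ _ He.
have key : forall e', e' \in Preq Q e ->
   [/\ (M e' <= i)%N, s' (M e') = s (M e') & etime (s (M e')) <= etime (s i)].
  move=> e' He'.
  have Ht : etime (s' (M e')) <= etime (s' i).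
    move: He'; rewrite !inE => /orP[/andP[He'E pe]|/eqP->]; last by rewrite Mei.
    by rewrite -Mei; apply/ltW/Ford.
  have Mi := inc_idx _ _ _ _ _ Hs' Ht.
  split => //; first by apply Hss'.
  by rewrite -Hss' // -(Hss' i) //.
split; first by move=> u v Hu Hv; apply: Finj; exact: qverts_sub Hu || exact: qverts_sub Hv.
split; first by move=> u Hu; apply: Flab; exact: qverts_sub Hu.
split.
  move=> e' He'; have [Mi Es Et] := key _ He'.
  have [Hsn E1 E2] := Fedge e' (subsetP sub _ He').
  rewrite -Es; split => //.
  move: Hsn; rewrite /in_snapshot Es => /andP[H1 H2].
  rewrite Et andbT.
  have : etime (s' i) <= etime (s' j) by apply: (inc_le _ _ _ _ _ Hs').
  rewrite Hss' // => Hij; lra.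
move=> e1 e2 H1 H2 p.
have [_ <- _] := key _ H1; have [_ <- _] := key _ H2.
by apply: Ford => //; apply: (subsetP sub).
Qed.
Lemma bwd (L : eqType) (R : realFieldType) (s : stream L R) (W : R)
  (Q : query L) (i : nat) eps F M :
  increasing_times s -> 0 < W -> strict_po Q -> eps \in qE Q ->
  tc_match s W (etime (s i)) Q (Preq Q eps) F M -> M eps = i ->
  exists s' : stream L R,
    [/\ (forall k, (k <= i)%N -> s' k = s k), increasing_times s' &
    exists j, (i <= j)%N /\ exists F' M',
      tc_match s' W (etime (s' j)) Q (qE Q) F' M' /\ M' eps = i].
Proof.
move=> Hs W0 [Hirr Htr] Heps [Finj [Flab [Fedge Ford]]] Mei.
set P := Preq Q eps.
set rank := fun e : qV Q * qV Q => #|[set x in qE Q | qprec Q x e]|.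
set N := #|{: qV Q * qV Q}|.
set code := fun e : qV Q * qV Q => (rank e * N + enum_rank e)%N.
set B := (N * N + N)%N.
have rankN e : (rank e <= N)%N by apply: max_card.
have rN (e : qV Q * qV Q) : (enum_rank e < N)%N by apply: ltn_ord.
have codeB e : (code e < B)%N.
  have := rankN e; have := rN e; rewrite /code /B => h1 h2.
  have : (rank e * N <= N * N)%N by rewrite leq_mul2r h2 orbT.
  lia.
have codemono e e' : (rank e < rank e')%N -> (code e < code e')%N.
  move=> h; have := rN e; rewrite /code => h1.
  have : ((rank e).+1 * N <= rank e' * N)%N by rewrite leq_mul2r h orbT.
  rewrite mulSn; lia.
have codeinj e e' : code e = code e' -> e = e'.
  move=> h.
  have hr : rank e = rank e'.
    have := codemono e e'; have := codemono e' e; lia.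
  move: h; rewrite /code hr => /eqP; rewrite eqn_add2l => /eqP h.
  by apply: enum_rank_inj; apply: val_inj.
clearbody code B.
have Hex : exists k, (k <= i)%N && (etime (s i) - W < etime (s k)).
  by exists i; rewrite leqnn /=; lra.
case: (ex_minnP Hex) => k0 /andP[k0i k0W] k0min.
set g := etime (s k0) - (etime (s i) - W).
have g0 : 0 < g by rewrite /g subr_gt0.
set d := g / (B.+1)%:R.
have d0 : 0 < d by rewrite /d divr_gt0 // ltr0n.
have hBd : (B%:R * d + d = g).
  have hB1 : (B.+1)%:R != 0 :> R by rewrite pnatr_eq0.
  by rewrite /d -[X in _ + X]mul1r -mulrDl natr1 mulrCA mulfV // mulr1.
set X := (\max_(u in qverts Q P) (F u).1).+1.
have bnd w : w \in qverts Q P -> ((F w).1 < X)%N.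
  by move=> Hw; rewrite /X ltnS; apply: leq_bigmax_cond.
clearbody X.
set F' := fun u => if u \in qverts Q P then F u else ((X + enum_rank u)%N, qlab Q u).
set pk := fun k : nat => [pick e in qE Q :\: P | k == (i.+1 + code e)%N].
have pkE e : e \in qE Q :\: P -> pk (i.+1 + code e)%N = Some e.
  move=> He; rewrite /pk; case: pickP => [e' /andP[_ /eqP h]|h].
    by rewrite (codeinj e' e) //; lia.
  by have := h e; rewrite He eqxx.
pose s' : stream L R := fun k => if (k <= i)%N then s k else
  SEdge (if pk k is Some e then F' e.1 else esrc (s i))
        (if pk k is Some e then F' e.2 else esrc (s i))
        (etime (s i) + (k - i)%:R * d).
have s'le k : (k <= i)%N -> s' k = s k by rewrite /s' => ->.
have s't k : (i <= k)%N -> etime (s' k) = etime (s i) + (k - i)%:R * d.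
  rewrite /s' leq_eqVlt => /orP[/eqP<-|ik]; first by rewrite leqnn subnn mul0r addr0.
  by rewrite leqNgt ik.
have Hs' : increasing_times s'.
  move=> a b ab; case: (leqP b i) => bi.
    by rewrite !s'le //; [apply: Hs | lia].
  rewrite (s't b) ?(ltnW bi) //; case: (leqP a i) => ai.
    rewrite s'le //; have := inc_le _ _ _ _ _ Hs ai.
    have : 0 < (b - i)%:R * d by rewrite mulr_gt0 // ltr0n subn_gt0.
    lra.
  rewrite s't ?(ltnW ai) // ltrD2l ltr_pM2r // ltr_nat; lia.
exists s'; split => //.
exists (i + B)%N; split; first by rewrite leq_addr.
set t := etime (s' (i + B)%N).
have tE : t = etime (s i) + B%:R * d by rewrite /t s't ?leq_addr // addKn.
have tW : t - W < etime (s k0) by rewrite tE; rewrite /g in hBd; lra.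
have k0si : etime (s k0) <= etime (s i) by apply: (inc_le _ _ _ _ _ Hs).
have ti : etime (s i) <= t by rewrite tE; have := mulr_ge0 (ler0n _ B) (ltW d0); lra.
have Psub : P \subset qE Q by apply/subsetP => e; rewrite !inE => /orP[/andP[]//|/eqP->//].
have vP e : e \in P -> (e.1 \in qverts Q P) && (e.2 \in qverts Q P).
  by move=> He; rewrite !inE; apply/andP; split; apply/existsP; exists e; rewrite He eqxx ?orbT.
have PM e : e \in P -> [/\ (k0 <= M e)%N, (M e <= i)%N & s' (M e) = s (M e)].
  move=> He; have [/andP[H1 H2] _ _] := Fedge e He.
  have Mi := inc_idx _ _ _ _ _ Hs H2.
  by split => //; [apply: k0min; rewrite Mi | apply: s'le].
pose M' e := if e \in P then M e else (i.+1 + code e)%N.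
exists F', M'; split; last by rewrite /M' (_ : eps \in P) // !inE eqxx orbT.
split.
  move=> u v Hu Hv; rewrite /F'.
  case Hu' : (u \in qverts Q P); case Hv' : (v \in qverts Q P).
  - by apply: Finj.
  - by move=> Huv; have := bnd _ Hu'; rewrite Huv /= ltnNge leq_addr.
  - by move=> Huv; have := bnd _ Hv'; rewrite -Huv /= ltnNge leq_addr.
  - by case=> /eqP; rewrite eqn_add2l => /eqP h _; apply: (@enum_rank_inj (qV Q)); apply: val_inj.
split.
  by move=> u Hu; rewrite /F'; case: ifP => // Hu'; apply: Flab.
split.
  move=> e He; rewrite /M'; case: ifP => HeP.
    have [k0M Mi Es] := PM e HeP.
    have [/andP[H1 H2] E1 E2] := Fedge e HeP.
    have [v1 v2] := andP (vP e HeP).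
    rewrite /F' v1 v2 /in_snapshot Es; split => //.
    have := inc_le _ _ _ _ _ Hs k0M => hk; apply/andP; split; lra.
  have HeD : e \in qE Q :\: P by rewrite inE HeP He.
  have ik : (i < i.+1 + code e)%N by rewrite addSn ltnS leq_addr.
  rewrite /in_snapshot /s' leqNgt ik /= pkE //; split => //.
  apply/andP; split.
    have : 0 < (i.+1 + code e - i)%:R * d by rewrite mulr_gt0 // ltr0n subn_gt0.
    lra.
  rewrite tE lerD2l ler_pM2r // ler_nat leq_subLR addSn -addnS leq_add2l.
  exact: codeB.
move=> e e' He He' p; rewrite /M'.
case: ifP => HeP; case: ifP => He'P.
- have [_ _ ->] := PM e HeP; have [_ _ ->] := PM e' He'P; exact: Ford.
- have [_ Mi ->] := PM e HeP.
  have := inc_le _ _ _ _ _ Hs Mi.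
  have hik : (i < i.+1 + code e')%N by rewrite addSn ltnS leq_addr.
  rewrite s't; last exact: ltnW hik.
  have : 0 < (i.+1 + code e' - i)%:R * d by rewrite mulr_gt0 // ltr0n subn_gt0.
  lra.
- exfalso; move: He'P HeP; rewrite !inE => /orP[/andP[_ p']|/eqP Ee].
    by rewrite He (Htr _ _ _ He He' Heps p p').
  by subst e'; rewrite He p.
- have hik c : (i <= i.+1 + c)%N by rewrite addSn ltnW // ltnS leq_addr.
  rewrite !s't ?hik //.
  rewrite ltrD2l ltr_pM2r // ltr_nat.
  rewrite !addSn !subSn ?leq_addr // !addKn ltnS.
  apply: codemono; apply: proper_card; apply/properP; split.
    apply/subsetP => x; rewrite !inE => /andP[Hx px]; rewrite Hx /=.
    exact: (Htr _ _ _ Hx He He' px p).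
  by exists e; rewrite !inE He ?p // (negbTE (Hirr _ He)).
Qed.

Theorem lemma1 (L : eqType) (R : realFieldType) (s : stream L R) (W : R)
  (Q : query L) (i : nat) :
  increasing_times s -> 0 < W -> strict_po Q ->
  (~ discardable s W Q i <->
   exists eps, eps \in qE Q /\
     exists F M, tc_match s W (etime (s i)) Q (Preq Q eps) F M /\ M eps = i).
Proof.
move=> Hs W0 Hpo; split.
  move=> Hnd; apply: NNPP => Hne; apply: Hnd.
  move=> s' Hss' Hs' j ij F M Hm e He Mei.
  apply: Hne; exists e; split => //; exists F, M; split => //.
  exact: (@fwd _ _ s s' W Q i j F M e Hs W0 Hss' Hs' ij Hm He Mei).
move=> [eps [Heps [F [M [Hm Mei]]]]] Hd.
have [s' [Hss' Hs' [j [ij [F' [M' [Hm' M'e]]]]]]] := @bwd _ _ s W Q i eps F M Hs W0 Hpo Heps Hm Mei.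
exact: (Hd s' Hss' Hs' j ij F' M' Hm' eps Heps M'e).
Qed.
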